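(* Let $\mathcal H$ be a well-structured preconditioner set and $M\in\mathcal S^d_{++}$. Then $\langle M,H\rangle=\langle P_{\mathcal H}(M)^2,H\rangle$ for every $H\in\mathcal H$, and $P_{\mathcal H}(M+\lambda I_d)^2=P_{\mathcal H}(M)^2+\lambda I_d$ for every $\lambda\ge0$.
   Context: $\mathcal S^d_+$ (resp. $\mathcal S^d_{++}$) denotes the set of real symmetric positive semidefinite (resp. positive definite) $d\times d$ matrices; $\langle A,B\rangle=\operatorname{Tr}(A^\top B)$. A set $\mathcal H\subseteq\mathcal S_+^d$ is a well-structured preconditioner set if $\mathcal H=\mathcal S_+^d\cap\mathcal K$ for some set $\mathcal K$ of real $d\times d$ matrices that is closed under scalar multiplication, matrix addition and matrix multiplication and contains the identity $I_d$. For $M\in\mathcal S^d_{++}$, $P_{\mathcal H}(M):=\arg\min_{H\in\mathcal H\cap\mathcal S^d_{++}}\langle M,H^{-1}\rangle+\operatorname{Tr}(H)$ (the minimizer exists and is unique). *)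

(* Defs.v *)
From HB Require Import structures.
From mathcomp Require Import all_boot all_order all_algebra.
From mathcomp Require Import reals.
Set Implicit Arguments. Unset Strict Implicit. Unset Printing Implicit Defensive.
Import Order.TTheory GRing.Theory Num.Theory.
Local Open Scope ring_scope.

Section Defs.
Variables (R : realType) (d : nat).

Definition frob (A B : 'M[R]_d) : R := \tr (A^T *m B).

Definition psd (A : 'M[R]_d) : Prop :=
  A^T = A /\ forall x : 'cV[R]_d, 0 <= (x^T *m A *m x) 0 0.
Definition pd (A : 'M[R]_d) : Prop :=
  A^T = A /\ forall x : 'cV[R]_d, x != 0 -> 0 < (x^T *m A *m x) 0 0.

Definition well_structured (Hs : 'M[R]_d -> Prop) : Prop :=
  exists K : 'M[R]_d -> Prop,
    [/\ forall (a : R) A, K A -> K (a *: A),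
        forall A B, K A -> K B -> K (A + B),
        forall A B, K A -> K B -> K (A *m B),
        K 1%:M
      & forall H, Hs H <-> (psd H /\ K H)].

Definition is_PH (Hs : 'M[R]_d -> Prop) (M P : 'M[R]_d) : Prop :=
  [/\ Hs P, pd P &
      forall Q, Hs Q -> pd Q ->
        frob M (invmx P) + \tr P <= frob M (invmx Q) + \tr Q].

End Defs.

(* Main.v *)
Require Import Defs.
From HB Require Import structures.
From mathcomp Require Import all_boot all_order all_algebra.
From mathcomp Require Import reals.
From mathcomp Require Import ring lra.
Import Order.TTheory GRing.Theory Num.Theory.
Local Open Scope ring_scope.
Set Implicit Arguments. Unset Strict Implicit. Unset Printing Implicit Defensive.

Section Aux.
Variables (R : realType) (d : nat).
Implicit Types (A B N : 'M[R]_d) (x y : 'cV[R]_d).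

Definition qf A x : R := (x^T *m A *m x) 0 0.
Definition bf A x y : R := (x^T *m A *m y) 0 0.
Definition nrm x : R := (x^T *m x) 0 0.

Lemma nrmE x : nrm x = \sum_i x i 0 ^+ 2.
Proof. by rewrite /nrm mxE; apply: eq_bigr => i _; rewrite mxE expr2. Qed.

Lemma nrm_ge0 x : 0 <= nrm x.
Proof. by rewrite nrmE; apply: sumr_ge0 => i _; apply: sqr_ge0. Qed.

Lemma sq_le_nrm x i : x i 0 ^+ 2 <= nrm x.
Proof.
rewrite nrmE (bigD1 i) //= lerDl; apply: sumr_ge0 => j _; apply: sqr_ge0.
Qed.

Lemma qfE A x : qf A x = \sum_i \sum_j x i 0 * A i j * x j 0.
Proof.
rewrite /qf mxE exchange_big /=; apply: eq_bigr => j _.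
rewrite mxE mulr_suml; apply: eq_bigr => i _; by rewrite !mxE.
Qed.

Lemma qf_bound A : exists c, 0 <= c /\ forall x, `|qf A x| <= c * nrm x.
Proof.
exists (\sum_i \sum_j `|A i j|); split.
  by apply: sumr_ge0 => i _; apply: sumr_ge0 => j _.
move=> x; rewrite qfE mulr_suml.
apply: (le_trans (ler_norm_sum _ _ _)); apply: ler_sum => i _.
rewrite mulr_suml.
apply: (le_trans (ler_norm_sum _ _ _)); apply: ler_sum => j _.
rewrite (mulrC (x i 0)) -mulrA normrM ler_wpM2l //.
rewrite normrM.
have hi := sq_le_nrm x i; have hj := sq_le_nrm x j.
have h : 2 * (`|x i 0| * `|x j 0|) <= x i 0 ^+ 2 + x j 0 ^+ 2.
  rewrite -[x i 0 ^+ 2]real_normK ?num_real // -[x j 0 ^+ 2]real_normK ?num_real //.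
  move: (`|x i 0|) (`|x j 0|) => a b; have := sqr_ge0 (a - b); rewrite sqrrB; lra.
lra.
Qed.

Definition dot x y : R := (x^T *m y) 0 0.

Lemma dotC x y : dot x y = dot y x.
Proof. by rewrite /dot !mxE; apply: eq_bigr => i _; rewrite !mxE mulrC. Qed.
Lemma dotDr x y z : dot x (y + z) = dot x y + dot x z.
Proof. by rewrite /dot mulmxDr mxE. Qed.
Lemma dotDl x y z : dot (x + y) z = dot x z + dot y z.
Proof. by rewrite dotC dotDr !(dotC z). Qed.
Lemma dotZr a x y : dot x (a *: y) = a * dot x y.
Proof. by rewrite /dot -scalemxAr mxE. Qed.
Lemma dotZl a x y : dot (a *: x) y = a * dot x y.
Proof. by rewrite dotC dotZr dotC. Qed.
Lemma dotNr x y : dot x (- y) = - dot x y.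
Proof. by rewrite -scaleN1r dotZr mulN1r. Qed.
Lemma dotNl x y : dot (- x) y = - dot x y.
Proof. by rewrite dotC dotNr dotC. Qed.
Lemma dotBr x y z : dot x (y - z) = dot x y - dot x z.
Proof. by rewrite dotDr dotNr. Qed.
Lemma dotBl x y z : dot (x - y) z = dot x z - dot y z.
Proof. by rewrite dotDl dotNl. Qed.
Lemma dotMr x A y : dot x (A *m y) = dot (A^T *m x) y.
Proof. by rewrite /dot trmx_mul trmxK mulmxA. Qed.

Lemma qf_dot A x : qf A x = dot x (A *m x).
Proof. by rewrite /qf /dot mulmxA. Qed.
Lemma nrm_dot x : nrm x = dot x x.
Proof. by []. Qed.
Lemma bf_dot A x y : bf A x y = dot x (A *m y).
Proof. by rewrite /bf /dot mulmxA. Qed.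

Lemma qfD A B x : qf (A + B) x = qf A x + qf B x.
Proof. by rewrite !qf_dot mulmxDl dotDr. Qed.
Lemma qfZ a A x : qf (a *: A) x = a * qf A x.
Proof. by rewrite !qf_dot -scalemxAl dotZr. Qed.
Lemma qf1 x : qf 1%:M x = nrm x.
Proof. by rewrite qf_dot mul1mx. Qed.

Lemma pd_unit A : pd A -> A \in unitmx.
Proof.
case=> sA pA; rewrite -row_free_unit -kermx_eq0; apply/negPn/negP => nz.
have [i hi] : exists i, row i (kermx A) != 0.
  apply/existsP; move: nz; apply: contraR; rewrite negb_exists => /forallP h.
  apply/eqP/row_matrixP => i; rewrite row0; exact/eqP/negPn/h.
set v := row i (kermx A) in hi.
have hv : v *m A = 0 by rewrite /v -row_mul mulmx_ker row0.
have : (v^T)^T *m A *m v^T = 0 by rewrite trmxK hv mul0mx.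
move/(congr1 (fun m : 'M[R]_1 => m 0 0)) => h0.
have : v^T != 0 by apply: contra hi => /eqP h; rewrite -[v]trmxK h linear0.
move/pA; rewrite h0 mxE ltxx //.
Qed.

Lemma qf_inv B x : B \in unitmx -> qf (invmx B) x = qf B (invmx B *m x).
Proof.
move=> uB; rewrite !qf_dot mulKVmx // dotC //.
Qed.

Lemma inv_upper B mu : B \in unitmx -> 0 < mu ->
  (forall x, mu * nrm x <= qf B x) ->
  forall x, 0 <= qf (invmx B) x /\ qf (invmx B) x <= nrm x / mu.
Proof.
move=> uB mu0 hB x; rewrite qf_inv //.
set z := invmx B *m x.
have hz : qf B z = dot z x by rewrite qf_dot /z mulKVmx.
have h1 := hB z; have h0 := nrm_ge0 z.
split; first by apply: le_trans h1; apply: mulr_ge0 => //; exact: ltW.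
have h2 := nrm_ge0 (x - mu *: z).
rewrite nrm_dot dotBl !dotBr !dotZl !dotZr (dotC x z) -!nrm_dot in h2.
rewrite ler_pdivlMr // hz.
rewrite hz in h1.
have h3 : mu * (mu * nrm z) <= mu * dot z x by rewrite ler_pM2l.
nra.
Qed.

Lemma inv_lower A c : A \in unitmx -> A^T = A -> 0 < c ->
  (forall x, 0 <= qf A x) ->
  (forall x, qf (invmx A) x <= c * nrm x) ->
  forall x, nrm x / c <= qf A x.
Proof.
move=> uA sA c0 pA hc x.
set a := c^-1.
have := pA (invmx A *m (A *m x - a *: x)).
rewrite -qf_inv // qf_dot mulmxBr -scalemxAr mulKmx //.
rewrite dotBl !dotBr !dotZl !dotZr.
rewrite -[dot x x]/(nrm x) -qf_dot.
have -> : dot (A *m x) (invmx A *m x) = nrm x.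
  by rewrite dotC dotMr sA mulKVmx.
have -> : dot (A *m x) x = qf A x by rewrite dotC qf_dot.
have hq := hc x. have hn := nrm_ge0 x.
have ha : a * c = 1 by rewrite /a mulVf // gt_eqF.
have ha0 : 0 < a by rewrite /a invr_gt0.
move=> h.
have h4 : a * (a * qf (invmx A) x) <= a * nrm x.
  have : a * qf (invmx A) x <= a * (c * nrm x) by rewrite ler_pM2l.
  rewrite [a * (c * _)]mulrA ha mul1r => h5; by rewrite ler_pM2l.
rewrite mulrC; lra.
Qed.

Definition ev (i : 'I_d) : 'cV[R]_d := delta_mx i 0.

Lemma dot_ev N i j : dot (ev i) (N *m ev j) = N i j.
Proof. by rewrite /dot /ev trmx_delta -colE -rowE !mxE. Qed.

Lemma nrm_ev i : nrm (ev i) = 1.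
Proof. by rewrite /nrm /ev trmx_delta mul_delta_mx mxE !eqxx. Qed.

Lemma entry_bound N b : N^T = N ->
  (forall x, `|qf N x| <= b * nrm x) -> forall i j, `|N i j| <= b.
Proof.
move=> sN hb i j.
have hp : qf N (ev i + ev j) - qf N (ev i - ev j) = 4 * N i j.
  rewrite !qf_dot mulmxDr mulmxBr !dotDl !dotDr ?dotNl ?dotNr ?dotBl ?dotBr !dot_ev.
  have e : N j i = N i j by rewrite -{1}sN mxE.
  rewrite e.
  ring.
have hn : nrm (ev i + ev j) + nrm (ev i - ev j) = 4.
  rewrite !nrm_dot !dotDl !dotDr ?dotNl ?dotNr ?dotBl ?dotBr -!nrm_dot !nrm_ev (dotC (ev j)).
  ring.
have h1 := hb (ev i + ev j); have h2 := hb (ev i - ev j).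
have hn1 := nrm_ge0 (ev i + ev j); have hn2 := nrm_ge0 (ev i - ev j).
have : `|4 * N i j| <= b * 4.
  rewrite -hp -hn mulrDr; apply: le_trans (ler_normB _ _) _; exact: lerD.
rewrite normrM ger0_norm // mulrC ler_pM2r //.
Qed.

Lemma nrm_eq0 x : nrm x = 0 -> x = 0.
Proof.
move=> h; apply/matrixP => i j; rewrite ord1 mxE.
have := sq_le_nrm x i; rewrite h => hi.
have : x i 0 ^+ 2 = 0 by apply/eqP; rewrite eq_le hi sqr_ge0.
by move/eqP; rewrite sqrf_eq0 => /eqP.
Qed.

Lemma pd_psd A : pd A -> forall x, 0 <= qf A x.
Proof.
case=> _ pA x; have [->|nz] := eqVneq x 0.
  by rewrite /qf mulmx0 mxE.
exact: ltW (pA x nz).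
Qed.

Lemma pd_of_lower A mu : A^T = A -> 0 < mu -> (forall x, mu * nrm x <= qf A x) -> pd A.
Proof.
move=> sA mu0 h; split => // x nz.
have hn : 0 < nrm x.
  rewrite lt_def nrm_ge0 andbT; apply: contra nz => /eqP/nrm_eq0 ->; by [].
apply: lt_le_trans (h x); exact: mulr_gt0.
Qed.

End Aux.

Lemma zero_of_small (R : realType) (L C delta : R) : 0 < delta -> 0 <= C ->
  (forall t, `|t| <= delta -> 0 <= t * L + t ^+ 2 * C) -> L = 0.
Proof.
move=> d0 C0 h; apply/eqP/negPn/negP => nz.
have La : 0 < `|L| by rewrite normr_gt0.
set s := Num.min delta (`|L| / (C + 1)).
have s0 : 0 < s by rewrite /s lt_min d0 divr_gt0 // ltr_wpDl.
have sd : s <= delta by rewrite /s ge_min lexx.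
have sL : s <= `|L| / (C + 1) by rewrite /s ge_min lexx orbT.
have sL' : s * (C + 1) <= `|L| by rewrite -ler_pdivlMr // ltr_wpDl.
pose t := if 0 < L then - s else s.
have ht : `|t| <= delta by rewrite /t; case: ifP => _; rewrite ?normrN gtr0_norm.
have := h t ht.
have -> : t ^+ 2 = s ^+ 2 by rewrite /t; case: ifP => _; rewrite ?sqrrN.
have -> : t * L = - (s * `|L|).
  rewrite /t; case: ifP => hL.
    by rewrite gtr0_norm // mulNr.
  rewrite ler0_norm ?mulrN ?opprK //; rewrite leNgt hL //.
move=> h2.
have : s * `|L| <= s * (s * C) by rewrite expr2 in h2; lra.
rewrite ler_pM2l // => h3.
have : s * C + s <= `|L| by rewrite mulrDr mulr1 in sL'.
lra.
Qed.

Section Stat.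
Variables (R : realType) (d : nat).
Implicit Types (A B M N W X Y P D S : 'M[R]_d).

Lemma tr_bound W N b : (forall i j, `|N i j| <= b) ->
  `|\tr (W *m N)| <= (\sum_i \sum_j `|W i j|) * b.
Proof.
move=> hb; rewrite /mxtrace mulr_suml.
apply: (le_trans (ler_norm_sum _ _ _)); apply: ler_sum => i _.
rewrite mxE mulr_suml.
apply: (le_trans (ler_norm_sum _ _ _)); apply: ler_sum => j _.
rewrite normrM; apply: ler_wpM2l => //.
Qed.

Lemma frobD M X Y : frob M (X + Y) = frob M X + frob M Y.
Proof. by rewrite /frob mulmxDr mxtraceD. Qed.
Lemma frobZ M a X : frob M (a *: X) = a * frob M X.
Proof. by rewrite /frob -scalemxAr mxtraceZ. Qed.
Lemma frobN M X : frob M (- X) = - frob M X.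
Proof. by rewrite -scaleN1r frobZ mulN1r. Qed.
Lemma frobDl M N X : frob (M + N) X = frob M X + frob N X.
Proof. by rewrite /frob linearD /= mulmxDl mxtraceD. Qed.
Lemma frobZl M a X : frob (a *: M) X = a * frob M X.
Proof. by rewrite /frob linearZ /= -scalemxAl mxtraceZ. Qed.

Lemma inv_expand P D (t : R) : P \in unitmx -> (P + t *: D) \in unitmx ->
  invmx (P + t *: D) = invmx P - t *: (invmx P *m D *m invmx P)
    + t ^+ 2 *: (invmx P *m D *m invmx (P + t *: D) *m D *m invmx P).
Proof.
move=> uP uQ; set Q := P + t *: D; set Pi := invmx P; set Qi := invmx Q.
have E1 : Qi = Pi - t *: (Pi *m D *m Qi).
  have : Pi = Pi *m Q *m Qi by rewrite -mulmxA mulmxV // mulmx1.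
  rewrite /Q mulmxDr mulVmx // -scalemxAr mulmxDl mul1mx -scalemxAl => e.
  by rewrite {1}e addrK.
have E2 : Qi = Pi - t *: (Qi *m D *m Pi).
  have : Pi = Qi *m Q *m Pi by rewrite mulVmx // mul1mx.
  rewrite /Q mulmxDr mulmxDl -[Qi *m P *m Pi]mulmxA mulmxV // mulmx1 -scalemxAr -scalemxAl => e.
  by rewrite {1}e addrK.
rewrite {1}E1 {1}E2 !mulmxBr -scalemxAr scalerBr scalerA -expr2 !mulmxA.
by rewrite opprB addrA addrAC.
Qed.

Lemma stationary (Hs K : 'M[R]_d -> Prop) M P :
  (forall (a : R) A, K A -> K (a *: A)) ->
  (forall A B, K A -> K B -> K (A + B)) ->
  (forall H, Hs H <-> psd H /\ K H) -> is_PH Hs M P ->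
  forall D, K D -> D^T = D -> \tr D = frob M (invmx P *m D *m invmx P).
Proof.
move=> KZ KD hHs [HsP pdP opt] D KDD sD.
have uP := pd_unit pdP. have sP : P^T = P := pdP.1.
have KP : K P by case/(hHs P): HsP.
set Pi := invmx P.
have [c2 [c20 hc2]] := qf_bound Pi.
set c := c2 + 1.
have c0 : 0 < c by rewrite /c ltr_wpDl.
have hPi : forall x, qf (invmx P) x <= c * nrm x.
  move=> x; apply: le_trans (ler_norm _) _; apply: le_trans (hc2 x) _.
  by rewrite ler_wpM2r ?nrm_ge0 // /c lerDl.
have lowP := inv_lower uP sP c0 (pd_psd pdP) hPi.
have [cD [cD0 hcD]] := qf_bound D.
set mu := c^-1 / 2.
have mu0 : 0 < mu by rewrite /mu divr_gt0 // invr_gt0.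
set delta := mu / (cD + 1).
have cD1 : 0 < cD + 1 by rewrite ltr_wpDl.
have delta0 : 0 < delta by rewrite /delta divr_gt0.
have dcD : delta * cD <= mu.
  by rewrite /delta mulrAC ler_pdivrMr // ler_pM2l // lerDl.
have key : forall t, `|t| <= delta ->
    0 <= t * (\tr D - frob M (Pi *m D *m Pi)) +
         t ^+ 2 * ((\sum_i \sum_j `|(D *m Pi *m M^T *m Pi *m D) i j|) * mu^-1).
  move=> t ht.
  have lowQ : forall x, mu * nrm x <= qf (P + t *: D) x.
    move=> x; rewrite qfD qfZ.
    have h1 := lowP x. have hn := nrm_ge0 x.
    have h2 : `|t * qf D x| <= mu * nrm x.
      rewrite normrM; apply: le_trans (_ : delta * (cD * nrm x) <= _).
        apply: ler_pM => //; exact: hcD.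
      by rewrite mulrA; apply: (ler_wpM2r hn).
    have h3 : nrm x / c = 2 * (mu * nrm x).
      by rewrite /mu; field; rewrite gt_eqF.
    move: h2; rewrite ler_norml => /andP [h4 _]; lra.
  have sQ : (P + t *: D)^T = P + t *: D by rewrite linearD linearZ /= sP sD.
  have pdQ : pd (P + t *: D) := pd_of_lower sQ mu0 lowQ.
  have HsQ : Hs (P + t *: D).
    apply/hHs; split; first by split => //; exact: pd_psd pdQ.
    exact: KD KP (KZ _ _ KDD).
  have uQ := pd_unit pdQ.
  have hQi := inv_upper uQ mu0 lowQ.
  have hQi' : forall x, `|qf (invmx (P + t *: D)) x| <= mu^-1 * nrm x.
    move=> x; have [a b] := hQi x; by rewrite ger0_norm // mulrC.
  have sQi : (invmx (P + t *: D))^T = invmx (P + t *: D) by rewrite trmx_inv sQ.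
  have eb := entry_bound sQi hQi'.
  have hr := tr_bound (D *m Pi *m M^T *m Pi *m D) eb.
  have er : frob M (Pi *m D *m invmx (P + t *: D) *m D *m Pi) =
      \tr ((D *m Pi *m M^T *m Pi *m D) *m invmx (P + t *: D)).
    rewrite /frob (mxtrace_mulC (D *m Pi *m M^T *m Pi *m D)).
    have -> : M^T *m (Pi *m D *m invmx (P + t *: D) *m D *m Pi) =
       (M^T *m Pi *m D) *m (invmx (P + t *: D) *m D *m Pi) by rewrite !mulmxA.
    by rewrite [LHS]mxtrace_mulC !mulmxA.
  have := opt _ HsQ pdQ.
  rewrite (inv_expand uP uQ) -/Pi !frobD frobN !frobZ mxtraceD mxtraceZ er.
  move: hr; set r := \tr _; set C := _ * mu^-1 => hr.
  have hrC : t ^+ 2 * r <= t ^+ 2 * C.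
    apply: ler_wpM2l; first exact: sqr_ge0.
    exact: le_trans (ler_norm _) hr.
  move=> h; lra.
have C0 : 0 <= (\sum_i \sum_j `|(D *m Pi *m M^T *m Pi *m D) i j|) * mu^-1.
  apply: mulr_ge0; last by rewrite invr_ge0 ltW.
  by apply: sumr_ge0 => i _; apply: sumr_ge0 => j _.
have := zero_of_small delta0 C0 key.
by move/eqP; rewrite subr_eq0 => /eqP.
Qed.

Lemma frob_self_eq0 S : frob S S = 0 -> S = 0.
Proof.
move=> h; apply/matrixP => j i; rewrite mxE.
have e : frob S S = \sum_i \sum_j S j i ^+ 2.
  rewrite /frob /mxtrace; apply: eq_bigr => k _; rewrite mxE.
  by apply: eq_bigr => l _; rewrite !mxE expr2.
have : S j i ^+ 2 <= frob S S.
  rewrite e (bigD1 i) //= (bigD1 j) //= -addrA lerDl.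
  apply: addr_ge0; first by apply: sumr_ge0 => l _; apply: sqr_ge0.
  by apply: sumr_ge0 => k _; apply: sumr_ge0 => l _; apply: sqr_ge0.
rewrite h => h2.
have : S j i ^+ 2 = 0 by apply/eqP; rewrite eq_le h2 sqr_ge0.
by move/eqP; rewrite sqrf_eq0 => /eqP.
Qed.

Lemma part1 (Hs K : 'M[R]_d -> Prop) M P :
  (forall (a : R) A, K A -> K (a *: A)) ->
  (forall A B, K A -> K B -> K (A + B)) ->
  (forall A B, K A -> K B -> K (A *m B)) ->
  (forall H, Hs H <-> psd H /\ K H) -> is_PH Hs M P ->
  forall H, Hs H -> frob M H = frob (P *m P) H.
Proof.
move=> KZ KD KM hHs hP H HsH.
have [HsP pdP _] := hP.
have uP := pd_unit pdP. have sP : P^T = P := pdP.1.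
have KP : K P by case/(hHs P): HsP.
have [[sH _] KH] := (hHs H).1 HsH.
have := stationary KZ KD hHs hP (KM _ _ (KM _ _ KP KH) KP).
rewrite !trmx_mul sP sH mulmxA => /(_ erefl).
rewrite -!mulmxA mulKmx // mulmxV // mulmx1 => <-.
by rewrite /frob trmx_mul sP [LHS]mxtrace_mulC [RHS]mxtrace_mulC mulmxA.
Qed.
End Stat.

Unset Implicit Arguments.
Set Strict Implicit.

Theorem lemmaA2 (R : realType) (d : nat) (Hs : 'M[R]_d -> Prop) (M : 'M[R]_d)
  (hHs : well_structured Hs) (hM : pd M) (P : 'M[R]_d) (hP : is_PH Hs M P) :
  (forall H, Hs H -> frob M H = frob (P *m P) H) /\
  (forall (lam : R), 0 <= lam -> forall Q : 'M[R]_d,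
      is_PH Hs (M + lam%:M) Q -> Q *m Q = P *m P + lam%:M).
Proof.
have [K [KZ KD KM K1 hK]] := hHs.
have p1 := part1 KZ KD KM hK hP.
split => // lam lam0 Q hQ.
have q1 := part1 KZ KD KM hK hQ.
have [HsP pdP _] := hP; have [HsQ pdQ _] := hQ.
have KP : K P by case/(hK P): HsP.
have KQ : K Q by case/(hK Q): HsQ.
have sP : P^T = P := pdP.1. have sQ : Q^T = Q := pdQ.1.
set S := Q *m Q - P *m P - lam%:M.
have KS : K S.
  rewrite /S; apply: (KD); [apply: (KD); [exact: (KM) | rewrite -scaleN1r; apply: (KZ); exact: (KM)]
    | rewrite -scaleN1r -scalemx1; apply: (KZ); exact: (KZ)].
have sS : S^T = S.
  by rewrite /S !linearB /= !trmx_mul sP sQ tr_scalar_mx.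
have orth : forall H, Hs H -> frob S H = 0.
  move=> H HsH; rewrite /S -!scaleN1r !frobDl !frobZl -q1 // -p1 //.
  rewrite frobDl; ring.
have [cS [cS0 hcS]] := qf_bound S.
have Hs1 : Hs 1%:M.
  apply/hK; split => //; split; first by rewrite trmx1.
  move=> x; change (0 <= qf 1%:M x); rewrite qf1; exact: nrm_ge0.
have HsH1 : Hs (cS *: 1%:M + S).
  apply/hK; split; last exact: (KD) (KZ _ _ K1) KS.
  split; first by rewrite linearD linearZ /= trmx1 sS.
  move=> x; change (0 <= qf (cS *: 1%:M + S) x); rewrite qfD qfZ qf1.
  have := hcS x; rewrite ler_norml => /andP[h _]; lra.
have e1 := orth _ Hs1. have e2 := orth _ HsH1.
rewrite frobD frobZ e1 mulr0 add0r in e2.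
have hS := frob_self_eq0 e2.
move/eqP: hS; rewrite /S subr_eq0 subr_eq => /eqP ->.
by rewrite addrC.
Qed.
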